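(* Let $n$ training samples carry labels in $\{1,\dots,K\}$ with indicator matrix $F\in\mathbb{R}^{K\times n}$, $n_k$ samples in class $k$; let the basis $G_1,\dots,G_r$ ($r\le n$) be a subset of the training samples with $r_k\ge1$ basis vectors in class $k$, and let $F_{G_i}$ be the class indicator of $G_i$. Let $\tilde W\in\mathbb{R}^{r\times n}$ be entrywise nonnegative with every column summing to one, of full row rank, satisfying $\tilde W_{ij}=0$ whenever $F_{G_i}\neq F_j$, and let $\tilde W'=\tilde W+\Delta W$ for a matrix $\Delta W\in\mathbb{R}^{r\times n}$. Put $\xi=\|\tilde W^\dagger\|_2\|\Delta W\|_2$, $\delta=\|\Delta W\|_F/\|\tilde W\|_F$, $n_\rho=\sqrt{\max_kn_k/\min_kn_k}$, $r_\rho=\sqrt{\max_kr_k/\min_kr_k}$. Let $X=F\tilde W^\dagger$, $X'=F\tilde W'^\dagger$, let $\gamma=\|X\|_F^2\|\tilde W\|_F^2/\|X\tilde W\|_F^2$ be the spectral risk of the ideal case, and let $\epsilon'=\|F-X'\tilde W'\|_F^2/\|X'\tilde W'\|_F^2+1$ and $\gamma'=\|X'\|_F^2\|\tilde W'\|_F^2/\|X'\tilde W'\|_F^2$ be the fitting error and spectral risk of the perturbed case. If $\xi<1/n_\rho$, then $$\epsilon'\le\frac{n_\rho^2\xi^2}{(1-n_\rho\xi)^2}+1,\qquad \gamma'\le\gamma(1+\delta)^2\Big(\frac{1+r_\rho\xi}{1-n_\rho\xi}\Big)^2.$$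
   Context: The columns of $F$ are standard basis vectors of $\mathbb{R}^K$: $F_j=e_k$ iff sample $j$ is in class $k$. $\|\cdot\|_2$ of a matrix is the spectral norm; $M^\dagger$ is the Moore–Penrose pseudo-inverse (for $\tilde W$ of full row rank, $\tilde W^\dagger=\tilde W^T(\tilde W\tilde W^T)^{-1}$). $X$ and $X'$ are the least-squares solutions of $\min_X\|F-X\tilde W\|_F^2$ and $\min_X\|F-X\tilde W'\|_F^2$. *)

(* Defs.v *)
From HB Require Import structures.
From mathcomp Require Import all_boot all_order all_algebra.
From mathcomp Require Import classical_sets reals.
Set Implicit Arguments. Unset Strict Implicit. Unset Printing Implicit Defensive.
Import Order.TTheory GRing.Theory Num.Theory.
Local Open Scope ring_scope.

Definition frob (R : realType) (m n : nat) (A : 'M[R]_(m, n)) : R :=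
  Num.sqrt (\sum_(i < m) \sum_(j < n) A i j ^+ 2).

Definition specnorm (R : realType) (m n : nat) (A : 'M[R]_(m, n)) : R :=
  reals.sup [set frob (A *m x) | x in [set x : 'cV[R]_n | frob x <= 1]]%classic.

(* P is the Moore-Penrose pseudo-inverse of A (Penrose equations; unique). *)
Definition is_pinv (R : realType) (m n : nat) (A : 'M[R]_(m, n)) (P : 'M[R]_(n, m)) : Prop :=
  [/\ A *m P *m A = A, P *m A *m P = P, (A *m P)^T = A *m P & (P *m A)^T = P *m A].

Definition Fmat (R : realType) (K n : nat) (c : 'I_n -> 'I_K) : 'M[R]_(K, n) :=
  \matrix_(k < K, j < n) (c j == k)%:R.

Definition ncls (K n : nat) (c : 'I_n -> 'I_K) (k : 'I_K) : nat := #|[set j | c j == k]|.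
(* number of basis vectors (G_i = sample g i) in class k *)
Definition rcls (K n r : nat) (c : 'I_n -> 'I_K) (g : 'I_r -> 'I_n) (k : 'I_K) : nat :=
  #|[set i | c (g i) == k]|.

Definition natmax (K : nat) (a : 'I_K -> nat) : nat := \max_(k < K) a k.
Definition natmin (K : nat) (a : 'I_K -> nat) : nat :=
  \big[minn/natmax a]_(k < K) a k.
Definition ratio_rho (R : realType) (K : nat) (a : 'I_K -> nat) : R :=
  Num.sqrt ((natmax a)%:R / (natmin a)%:R).

(* Main.v *)
Require Import Defs.
From HB Require Import structures.
From mathcomp Require Import all_boot all_order all_algebra.
From mathcomp Require Import classical_sets reals.
From mathcomp Require Import ring lra.
Set Implicit Arguments. Unset Strict Implicit. Unset Printing Implicit Defensive.
Import Order.TTheory GRing.Theory Num.Theory.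
Local Open Scope ring_scope.

Section S.
Variable R : realType.

Definition fs (m n : nat) (A : 'M[R]_(m, n)) : R := \sum_(i < m) \sum_(j < n) A i j ^+ 2.
Definition ip (m n : nat) (A B : 'M[R]_(m, n)) : R := \tr (A *m B^T).

Lemma fs_ge0 m n (A : 'M[R]_(m, n)) : 0 <= fs A.
Proof. by apply: sumr_ge0 => i _; apply: sumr_ge0 => j _; exact: sqr_ge0. Qed.

Lemma frobE m n (A : 'M[R]_(m, n)) : frob A = Num.sqrt (fs A).
Proof. by []. Qed.

Lemma frob_ge0 m n (A : 'M[R]_(m, n)) : 0 <= frob A.
Proof. exact: sqrtr_ge0. Qed.

Lemma frob_sq m n (A : 'M[R]_(m, n)) : frob A ^+ 2 = fs A.
Proof. by rewrite frobE sqr_sqrtr // fs_ge0. Qed.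

Lemma fs_ip m n (A : 'M[R]_(m, n)) : fs A = ip A A.
Proof.
rewrite /ip /fs /mxtrace; apply: eq_bigr => i _; rewrite !mxE.
by apply: eq_bigr => j _; rewrite !mxE expr2.
Qed.

Lemma ipC m n (A B : 'M[R]_(m, n)) : ip A B = ip B A.
Proof. by rewrite /ip -mxtrace_tr trmx_mul trmxK. Qed.

Lemma ipDl m n (A B C : 'M[R]_(m, n)) : ip (A + B) C = ip A C + ip B C.
Proof. by rewrite /ip mulmxDl mxtraceD. Qed.

Lemma ipZl m n a (A C : 'M[R]_(m, n)) : ip (a *: A) C = a * ip A C.
Proof. by rewrite /ip -scalemxAl mxtraceZ. Qed.

Lemma ipNl m n (A C : 'M[R]_(m, n)) : ip (- A) C = - ip A C.
Proof. by rewrite -scaleN1r ipZl mulN1r. Qed.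

Lemma fs_eq0 m n (A : 'M[R]_(m, n)) : fs A = 0 -> A = 0.
Proof.
move=> /eqP; rewrite psumr_eq0; last by move=> i _; apply: sumr_ge0 => j _; exact: sqr_ge0.
move=> /allP H; apply/matrixP => i j; rewrite mxE.
have /implyP := H i (mem_index_enum _) => /(_ isT).
rewrite psumr_eq0; last by move=> k _; exact: sqr_ge0.
move=> /allP /(_ j (mem_index_enum _)) /implyP /(_ isT).
by rewrite sqrf_eq0 => /eqP.
Qed.

Lemma frob_eq0 m n (A : 'M[R]_(m, n)) : frob A = 0 -> A = 0.
Proof. by move=> H; apply: fs_eq0; rewrite -frob_sq H expr0n. Qed.
End S.

Section S2.
Variable R : realType.

Lemma fsD m n (A B : 'M[R]_(m, n)) : fs (A + B) = fs A + fs B + 2 * ip A B.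
Proof.
rewrite !fs_ip !ipDl (ipC A (A + B)) (ipC B (A + B)) !ipDl (ipC B A); ring.
Qed.

Lemma fsZ m n a (A : 'M[R]_(m, n)) : fs (a *: A) = a ^+ 2 * fs A.
Proof. by rewrite !fs_ip ipZl (ipC A (a *: A)) ipZl mulrA expr2. Qed.

Lemma fsN m n (A : 'M[R]_(m, n)) : fs (- A) = fs A.
Proof. by rewrite -scaleN1r fsZ sqrrN expr1n mul1r. Qed.

Lemma frobN m n (A : 'M[R]_(m, n)) : frob (- A) = frob A.
Proof. by rewrite !frobE fsN. Qed.

Lemma CS m n (A B : 'M[R]_(m, n)) : ip A B <= frob A * frob B.
Proof.
have [/frob_eq0 ->|HA] := eqVneq (frob A) 0.
  by rewrite /ip mul0mx mxtrace0 mulr_ge0 // frob_ge0.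
have [/frob_eq0 ->|HB] := eqVneq (frob B) 0.
  by rewrite /ip trmx0 mulmx0 mxtrace0 mulr_ge0 // frob_ge0.
have := fs_ge0 (frob B *: A - frob A *: B).
rewrite fsD fsN fsZ fsZ ipC ipNl ipZl ipC ipZl -!frob_sq.
set a := frob A; set b := frob B => H.
have ha : 0 < a by rewrite lt_def HA frob_ge0.
have hb : 0 < b by rewrite lt_def HB frob_ge0.
have hab : 0 < a * b by exact: mulr_gt0.
rewrite -subr_ge0. 
have : 0 <= (a * b) * (a * b - ip A B) by nra.
by rewrite pmulr_rge0.
Qed.

Lemma CSabs m n (A B : 'M[R]_(m, n)) : `| ip A B | <= frob A * frob B.
Proof.
by rewrite ler_norml CS andbT lerNl -ipNl -(frobN A) CS.
Qed.

Lemma frob_triangle m n (A B : 'M[R]_(m, n)) : frob (A + B) <= frob A + frob B.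
Proof.
have h1 := frob_ge0 A; have h2 := frob_ge0 B; have h3 := frob_ge0 (A + B).
have h4 := CS A B.
have : frob (A + B) ^+ 2 <= (frob A + frob B) ^+ 2.
  by rewrite frob_sq fsD -!frob_sq; nra.
by rewrite ler_pXn2r // ?nnegrE //; nra.
Qed.

Lemma frob_sub m n (A B : 'M[R]_(m, n)) : frob (A - B) <= frob A + frob B.
Proof. by rewrite -(frobN B) frob_triangle. Qed.

Lemma fs_tr m n (A : 'M[R]_(m, n)) : fs A^T = fs A.
Proof. by rewrite !fs_ip /ip trmxK mxtrace_mulC. Qed.

Lemma frob_tr m n (A : 'M[R]_(m, n)) : frob A^T = frob A.
Proof. by rewrite !frobE fs_tr. Qed.

Lemma fs_proj m n (M : 'M[R]_(m, n)) (P : 'M[R]_n) :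
  P^T = P -> P *m P = P -> fs M = fs (M *m P) + fs (M *m (1%:M - P)).
Proof.
move=> PT PP.
have -> : fs M = fs (M *m P + M *m (1%:M - P)) by rewrite -mulmxDr addrC subrK mulmx1.
rewrite fsD; suff -> : ip (M *m P) (M *m (1%:M - P)) = 0 by rewrite mulr0 addr0.
rewrite /ip trmx_mul raddfB /= trmx1 PT -!mulmxA (mulmxA P) mulmxBr mulmx1 PP subrr.
by rewrite mul0mx mulmx0 mxtrace0.
Qed.

Lemma frob_projC m n (M : 'M[R]_(m, n)) (P : 'M[R]_n) :
  P^T = P -> P *m P = P -> frob (M *m (1%:M - P)) <= frob M.
Proof.
move=> PT PP; rewrite !frobE ler_sqrt ?fs_ge0 // (fs_proj M PT PP).
by rewrite lerDr fs_ge0.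
Qed.

Lemma zmod_aux (V : zmodType) (x y z : V) : x - (x + y - z) = - (y - z).
Proof. by rewrite !opprD !opprK !addrA addrN add0r. Qed.

Lemma frob_proj m n (M : 'M[R]_(m, n)) (P : 'M[R]_n) :
  P^T = P -> P *m P = P -> frob (M *m P) <= frob M.
Proof.
move=> PT PP; rewrite !frobE ler_sqrt ?fs_ge0 // (fs_proj M PT PP).
by rewrite lerDl fs_ge0.
Qed.

End S2.

Section S3.
Variable R : realType.

Lemma fs_rows m n (A : 'M[R]_(m, n)) : fs A = \sum_(i < m) fs (row i A).
Proof.
apply: eq_bigr => i _; rewrite /fs big_ord1; apply: eq_bigr => j _; by rewrite mxE.
Qed.

Lemma fs_cols m n (A : 'M[R]_(m, n)) : fs A = \sum_(j < n) fs (col j A)^T.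
Proof. by rewrite -fs_tr fs_rows; apply: eq_bigr => j _; rewrite tr_col. Qed.

Lemma fs_rv n (u : 'rV[R]_n) : fs u = \sum_(j < n) u 0 j ^+ 2.
Proof. by rewrite /fs big_ord1. Qed.

Lemma mulmx_ip m n p (A : 'M[R]_(m, n)) (B : 'M[R]_(n, p)) i j :
  (A *m B) i j = ip (row i A) (col j B)^T.
Proof.
rewrite /ip trmxK /mxtrace big_ord1 !mxE; apply: eq_bigr => k _; by rewrite !mxE.
Qed.

Lemma ip_sq m n (A B : 'M[R]_(m, n)) : ip A B ^+ 2 <= fs A * fs B.
Proof.
rewrite -!frob_sq -exprMn -real_normK ?num_real //.
by rewrite lerXn2r ?nnegrE ?normr_ge0 ?mulr_ge0 ?frob_ge0 // CSabs.
Qed.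

Lemma fs_mulmx m n p (A : 'M[R]_(m, n)) (B : 'M[R]_(n, p)) :
  fs (A *m B) <= fs A * fs B.
Proof.
rewrite (fs_rows (A *m B)) (fs_rows A) (fs_cols B) mulr_suml; apply: ler_sum => i _.
rewrite mulr_sumr (fs_rv (row i (A *m B))); apply: ler_sum => j _.
have -> : (row i (A *m B)) 0 j = ip (row i A) (col j B)^T by rewrite mxE mulmx_ip.
exact: (ip_sq (row i A) (col j B)^T).
Qed.

Lemma frob_mulmx m n p (A : 'M[R]_(m, n)) (B : 'M[R]_(n, p)) :
  frob (A *m B) <= frob A * frob B.
Proof. by rewrite !frobE -sqrtrM ?fs_ge0 // ler_sqrt ?fs_mulmx // mulr_ge0 ?fs_ge0. Qed.

Lemma frob0 m n : frob (0 : 'M[R]_(m, n)) = 0.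
Proof.
rewrite frobE /fs big1 ?sqrtr0 // => i _; rewrite big1 // => j _; by rewrite mxE expr0n.
Qed.

Lemma frobZ m n a (A : 'M[R]_(m, n)) : frob (a *: A) = `|a| * frob A.
Proof. by rewrite !frobE fsZ sqrtrM ?sqr_ge0 // sqrtr_sqr. Qed.

Definition SS m n (A : 'M[R]_(m, n)) :=
  [set frob (A *m x) | x in [set x : 'cV[R]_n | frob x <= 1]]%classic.

Lemma SS_ub m n (A : 'M[R]_(m, n)) : has_ubound (SS A).
Proof.
exists (frob A) => y [x /= Hx <-].
apply: (le_trans (frob_mulmx _ _)).
by rewrite ler_piMr ?frob_ge0.
Qed.

Lemma spec_ub m n (A : 'M[R]_(m, n)) (x : 'cV[R]_n) : frob x <= 1 -> frob (A *m x) <= specnorm A.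
Proof. by move=> Hx; apply: (ub_le_sup (SS_ub A)); exists x. Qed.

Lemma spec_ge0 m n (A : 'M[R]_(m, n)) : 0 <= specnorm A.
Proof.
have := @spec_ub _ _ A 0; rewrite mulmx0 frob0 frob0; apply; by rewrite ler01.
Qed.

Lemma spec_bound m n (A : 'M[R]_(m, n)) (x : 'cV[R]_n) : frob (A *m x) <= specnorm A * frob x.
Proof.
have [/frob_eq0 ->|Hx] := eqVneq (frob x) 0.
  by rewrite mulmx0 frob0 frob0 mulr0.
have hx : 0 < frob x by rewrite lt_def Hx frob_ge0.
have H := @spec_ub _ _ A ((frob x)^-1 *: x).
have e1 : frob ((frob x)^-1 *: x) = 1.
  by rewrite frobZ ger0_norm ?invr_ge0 ?frob_ge0 // mulVf.
rewrite e1 lexx -scalemxAr frobZ ger0_norm ?invr_ge0 ?frob_ge0 // in H.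
by move: (H isT); rewrite mulrC ler_pdivrMr.
Qed.

Lemma spec_bound_row m n (A : 'M[R]_(m, n)) (u : 'rV[R]_m) :
  frob (u *m A) <= specnorm A * frob u.
Proof.
set v := u *m A.
have h1 : fs v = ip u (A *m v^T)^T.
  by rewrite fs_ip /ip trmxK /v mulmxA.
have h2 : fs v <= frob u * (specnorm A * frob v).
  rewrite h1; apply: (le_trans (CS _ _)); rewrite frob_tr.
  by apply: ler_wpM2l; [exact: frob_ge0 | rewrite -(frob_tr v); exact: spec_bound].
have hv := frob_ge0 v; have hu := frob_ge0 u; have hs := spec_ge0 A.
have [Hv|Hv] := eqVneq (frob v) 0; first by rewrite Hv mulr_ge0.
have hv' : 0 < frob v by rewrite lt_def Hv hv.
rewrite -frob_sq expr2 in h2.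
have : frob v * frob v <= frob v * (specnorm A * frob u) by nra.
by rewrite ler_pM2l.
Qed.

Lemma spec_bound_mx k m n (Z : 'M[R]_(k, m)) (A : 'M[R]_(m, n)) :
  frob (Z *m A) <= specnorm A * frob Z.
Proof.
have hs := spec_ge0 A.
have : fs (Z *m A) <= (specnorm A) ^+ 2 * fs Z.
  rewrite (fs_rows (Z *m A)) fs_rows mulr_sumr; apply: ler_sum => i _.
  rewrite row_mul -!frob_sq -exprMn lerXn2r ?nnegrE ?frob_ge0 ?mulr_ge0 ?frob_ge0 //.
  exact: spec_bound_row.
rewrite -(frob_sq (Z *m A)) -(frob_sq Z) -exprMn => H.
by rewrite -(@ler_pXn2r _ 2) ?nnegrE ?frob_ge0 ?mulr_ge0 ?frob_ge0.
Qed.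

End S3.

Section S4.
Variable R : realType.

Lemma sqle (x y : R) : 0 <= x -> x <= y -> x ^+ 2 <= y ^+ 2.
Proof. move=> hx hxy; rewrite ler_pXn2r ?nnegrE //; exact: le_trans hxy. Qed.

Lemma divle (a b c d : R) : 0 < b -> 0 < d -> a * d <= c * b -> a / b <= c / d.
Proof. by move=> hb hd H; rewrite ler_pdivrMr // mulrAC ler_pdivlMr. Qed.

Lemma final1 (a f t e p d nr : R) :
  0 <= a -> 0 <= f -> 0 <= t -> 0 <= e -> 0 <= p -> 0 <= d -> 1 <= nr ->
  nr * (p * d) < 1 -> f ^+ 2 = t ^+ 2 + e ^+ 2 -> e <= d * a -> a <= p * f ->
  e ^+ 2 / t ^+ 2 + 1 <= nr ^+ 2 * (p * d) ^+ 2 / (1 - nr * (p * d)) ^+ 2 + 1.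
Proof.
move=> ha hf ht he hp hd hnr hx hF hea haf.
rewrite lerD2r.
set x := p * d.
have hx0 : 0 <= x by rewrite mulr_ge0.
have [t0|tpos] := eqVneq t 0.
  rewrite t0 expr0n /= invr0 mulr0; apply: divr_ge0; [apply: mulr_ge0; exact: sqr_ge0 | exact: sqr_ge0].
have tp : 0 < t by rewrite lt_def tpos ht.
have h1x : 0 < 1 - nr * x by rewrite subr_gt0.
apply: divle; [by rewrite exprn_gt0 | by rewrite exprn_gt0 |].
have e1 : e <= x * f.
  apply: (le_trans hea); rewrite /x (mulrC p) -mulrA; exact: ler_wpM2l.
have e2 : e ^+ 2 <= x ^+ 2 * f ^+ 2.
  by rewrite -exprMn; apply: sqle.
have x1 : x <= nr * x by rewrite ler_peMl.
have e3 : e ^+ 2 * (1 - x ^+ 2) <= x ^+ 2 * t ^+ 2.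
  by move: e2; rewrite hF; nra.
have e4 : (1 - nr * x) ^+ 2 <= 1 - x ^+ 2 by nra.
have e5 : e ^+ 2 * (1 - nr * x) ^+ 2 <= e ^+ 2 * (1 - x ^+ 2).
  by apply: ler_wpM2l => //; exact: sqr_ge0.
apply: (le_trans e5); apply: (le_trans e3).
apply: ler_wpM2r; first exact: sqr_ge0.
rewrite -exprMn.
by apply: sqle.
Qed.

Lemma final2 (a f y t e w dw w' p d nr rr : R) :
  0 <= a -> 0 <= f -> 0 <= y -> 0 <= t -> 0 <= e -> 0 <= w -> 0 <= dw -> 0 <= w' ->
  0 <= p -> 0 <= d -> 1 <= nr -> 1 <= rr ->
  nr * (p * d) < 1 -> f ^+ 2 = t ^+ 2 + e ^+ 2 -> e <= d * a -> a <= p * f ->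
  (1 - p * d) * y <= a -> (1 - p * d) * y <= p * t -> w' <= w + dw -> (w = 0 -> f = 0) ->
  y ^+ 2 * w' ^+ 2 / t ^+ 2 <=
  a ^+ 2 * w ^+ 2 / f ^+ 2 * (1 + dw / w) ^+ 2 * ((1 + rr * (p * d)) / (1 - nr * (p * d))) ^+ 2.
Proof.
move=> ha hf hy ht he hw hdw hw' hp hd hnr hrr hx hF hea haf hy1 hy2 hw'' hw0.
set x := p * d.
have hx0 : 0 <= x by rewrite mulr_ge0.
have x1 : x <= nr * x by rewrite ler_peMl.
have x2 : x <= rr * x by rewrite ler_peMl.
have hx1 : x < 1 by apply: le_lt_trans hx.
have h1x : 0 < 1 - nr * x by rewrite subr_gt0.
have [t0|tpos] := eqVneq t 0.
  rewrite t0 expr0n /= invr0 mulr0.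
  apply: mulr_ge0; last exact: sqr_ge0. apply: mulr_ge0; last exact: sqr_ge0.
  apply: divr_ge0; last exact: sqr_ge0. apply: mulr_ge0; exact: sqr_ge0.
have tp : 0 < t by rewrite lt_def tpos ht.
have fp : 0 < f.
  rewrite lt_def hf andbT; apply/eqP => f0; move: hF; rewrite f0 expr0n /=.
  have : 0 < t ^+ 2 by rewrite exprn_gt0.
  have := sqr_ge0 e; lra.
have wp : 0 < w.
  rewrite lt_def hw andbT; apply/eqP => /hw0 f0; by move: fp; rewrite f0 ltxx.
set Q := (1 + rr * x) / (1 - nr * x).
have hQ : (1 + x) <= Q * (1 - x).
  rewrite /Q mulrAC ler_pdivlMr //.
  have : 0 <= (1 - x) by lra.
  nra.
have hQ0 : 0 <= Q by apply: divr_ge0; lra.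
clearbody Q.
have key : (1 - x) * y * f <= (1 + x) * a * t.
  have [c1|c2] := leP (p * f) ((1 + x) * a).
    have s1 : (1 - x) * y * f <= p * t * f by apply: ler_wpM2r.
    apply: (le_trans s1); rewrite mulrAC; apply: ler_wpM2r => //; exact: ltW.
  have pp : 0 < p.
    rewrite lt_def hp andbT; apply/eqP => p0; move: c2; rewrite p0 mul0r.
    have : 0 <= (1 + x) * a by rewrite mulr_ge0 // addr_ge0.
    lra.
  have s2 : (1 + x) ^+ 2 * e ^+ 2 <= x ^+ 2 * f ^+ 2.
    have s3 : p ^+ 2 * ((1 + x) ^+ 2 * e ^+ 2) <= p ^+ 2 * (x ^+ 2 * f ^+ 2).
      have s4 : p * e <= x * a by rewrite /x -mulrA (mulrC p); rewrite mulrA [_ * p]mulrC -mulrA; apply: ler_wpM2l.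
      have s5 : (1 + x) * a <= p * f by exact: ltW.
      have s6 : 0 <= p * e by rewrite mulr_ge0.
      have s7 : 0 <= (1 + x) * a by rewrite mulr_ge0 // addr_ge0.
      have t1 := sqle s6 s4.
      have t2 := sqle s7 s5.
      have t3 : (1 + x) ^+ 2 * (p * e) ^+ 2 <= (1 + x) ^+ 2 * (x * a) ^+ 2.
        by apply: ler_wpM2l => //; exact: sqr_ge0.
      have t4 : x ^+ 2 * ((1 + x) * a) ^+ 2 <= x ^+ 2 * (p * f) ^+ 2.
        by apply: ler_wpM2l => //; exact: sqr_ge0.
      have -> : p ^+ 2 * ((1 + x) ^+ 2 * e ^+ 2) = (1 + x) ^+ 2 * (p * e) ^+ 2 by ring.
      have -> : p ^+ 2 * (x ^+ 2 * f ^+ 2) = x ^+ 2 * (p * f) ^+ 2 by ring.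
      apply: (le_trans t3); apply: le_trans t4.
      by rewrite le_eqVlt; apply/orP; left; apply/eqP; ring.
    by rewrite ler_pM2l ?exprn_gt0 in s3.
  have s8 : f <= (1 + x) * t.
    rewrite -(@ler_pXn2r _ 2) ?nnegrE ?mulr_ge0 ?addr_ge0 //.
    rewrite exprMn; move: s2; rewrite hF; nra.
  have s9 : (1 - x) * y * f <= a * f by apply: ler_wpM2r.
  apply: (le_trans s9); rewrite mulrAC (mulrC a); apply: ler_wpM2r => //.
have key2 : y * f <= Q * a * t.
  have h1 : 0 < 1 - x by lra.
  have : (1 - x) * (y * f) <= (1 - x) * (Q * a * t).
    rewrite mulrA; apply: (le_trans key).
    rewrite !mulrA; apply: ler_wpM2r => //; apply: ler_wpM2r => //.
    by rewrite mulrC.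
  by rewrite ler_pM2l.
have e1 : 1 + dw / w = (w + dw) / w by rewrite mulrDl divff // gt_eqF.
rewrite e1.
have k3 : (y * f) ^+ 2 <= (Q * a * t) ^+ 2 by apply: sqle; rewrite ?mulr_ge0.
have k4 : w' ^+ 2 <= (w + dw) ^+ 2 by apply: sqle.
rewrite ler_pdivrMr ?exprn_gt0 //.
have -> : a ^+ 2 * w ^+ 2 / f ^+ 2 * ((w + dw) / w) ^+ 2 * Q ^+ 2 * t ^+ 2
        = (Q * a * t) ^+ 2 * (w + dw) ^+ 2 / f ^+ 2.
  by field; rewrite !gt_eqF.
rewrite ler_pdivlMr ?exprn_gt0 // mulrAC -exprMn.
apply: ler_pM => //; by rewrite sqr_ge0.
Qed.

End S4.

Section S5.
Variable R : realType.

Lemma natmin_le_max K (a : 'I_K -> nat) : (natmin a <= natmax a)%N.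
Proof.
rewrite /natmin; apply: (big_ind (fun v => v <= natmax a)%N) => //.
  by move=> x y hx _; rewrite geq_min hx.
by move=> i _; exact: (leq_bigmax i).
Qed.

Lemma natmin_ge1 K (a : 'I_K -> nat) (k0 : 'I_K) : (forall k, 1 <= a k)%N -> (1 <= natmin a)%N.
Proof.
move=> H; rewrite /natmin; apply: (big_ind (fun v => 1 <= v)%N) => //.
- rewrite /natmax; apply: (leq_trans (H k0)); exact: (leq_bigmax k0).
- by move=> x y hx hy; rewrite leq_min hx hy.
Qed.

Lemma ratio_ge1 K (a : 'I_K -> nat) (k0 : 'I_K) : (forall k, 1 <= a k)%N -> 1 <= ratio_rho R a.
Proof.
move=> H; rewrite /ratio_rho.
have h1 := natmin_ge1 k0 H; have h2 := natmin_le_max a.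
have m0 : 0 < (natmin a)%:R :> R by rewrite ltr0n.
rewrite -[X in X <= _]sqrtr1 ler_sqrt ?divr_ge0 // ler_pdivlMr // mul1r ler_nat //.
Qed.

Lemma ratio0 (a : 'I_0 -> nat) : ratio_rho R a = 0.
Proof. by rewrite /ratio_rho /natmax big_ord0 mul0r sqrtr0. Qed.

End S5.

Unset Implicit Arguments.

Theorem theorem5 (R : realType) (K n r : nat)
  (c : 'I_n -> 'I_K) (g : 'I_r -> 'I_n)
  (W dW : 'M[R]_(r, n)) (Wp Wp' : 'M[R]_(n, r)) :
  injective g -> (r <= n)%N ->
  (forall k : 'I_K, (1 <= rcls c g k)%N) ->
  (forall i j, 0 <= W i j) ->
  (forall j, \sum_(i < r) W i j = 1) ->
  row_free W ->
  (forall i j, c (g i) != c j -> W i j = 0) ->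
  is_pinv W Wp -> is_pinv (W + dW) Wp' ->
  let F := Fmat R c in
  let W' := W + dW in
  let xi := specnorm Wp * specnorm dW in
  let delta := frob dW / frob W in
  let n_rho := ratio_rho R (ncls c) in
  let r_rho := ratio_rho R (rcls c g) in
  let X := F *m Wp in
  let X' := F *m Wp' in
  let gamma := frob X ^+ 2 * frob W ^+ 2 / frob (X *m W) ^+ 2 in
  let eps' := frob (F - X' *m W') ^+ 2 / frob (X' *m W') ^+ 2 + 1 in
  let gamma' := frob X' ^+ 2 * frob W' ^+ 2 / frob (X' *m W') ^+ 2 in
  xi < 1 / n_rho ->
  eps' <= n_rho ^+ 2 * xi ^+ 2 / (1 - n_rho * xi) ^+ 2 + 1 /\
  gamma' <= gamma * (1 + delta) ^+ 2 * ((1 + r_rho * xi) / (1 - n_rho * xi)) ^+ 2.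
Proof.
move=> ginj rn hr Wnn Wsum Wfree Wcls [p1 p2 p3 p4] [q1 q2 q3 q4].
move=> F W' xi delta n_rho r_rho X X' gamma eps' gamma' Hxi.
have hp := spec_ge0 Wp; have hd := spec_ge0 dW.
have hxi0 : 0 <= xi by rewrite mulr_ge0.
have [K0|Kpos] := posnP K.
  exfalso; subst K; move: Hxi; rewrite /n_rho ratio0 invr0 mulr0.
  by move=> H; have := le_lt_trans hxi0 H; rewrite ltxx.
pose k0 : 'I_K := Ordinal Kpos.
have hnc : forall k, (1 <= ncls c k)%N.
  move=> k; have := hr k; rewrite /rcls /ncls !card_gt0 => /set0Pn [i].
  rewrite inE => /eqP hi; apply/set0Pn; exists (g i); by rewrite inE hi.
have nr1 : 1 <= n_rho by exact: ratio_ge1 k0 hnc.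
have rr1 : 1 <= r_rho by exact: ratio_ge1 k0 hr.
have hnx : n_rho * xi < 1.
  by move: Hxi; rewrite ltr_pdivlMr ?(lt_le_trans ltr01) // mulrC.
have xi1 : xi < 1.
  apply: le_lt_trans hnx; by rewrite ler_peMl.
pose FG : 'M[R]_(K, r) := Fmat R (fun i => c (g i)).
have hF : F = FG *m W.
  apply/matrixP => k j; rewrite /F /FG /Fmat !mxE.
  under eq_bigr do rewrite mxE.
  have [hjk|hjk] := eqVneq (c j) k.
  - have -> : (true%:R : R) = \sum_(i < r) W i j by rewrite Wsum.
    apply: eq_bigr => i _.
    have [e|e] := eqVneq (c (g i)) k; first by rewrite mul1r.
    by rewrite mul0r Wcls // hjk.
  - rewrite big1 // => i _.
    have [e|e] := eqVneq (c (g i)) k; last by rewrite mul0r.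
    by rewrite Wcls ?mulr0 // e eq_sym.
have WWp : W *m Wp = 1%:M.
  by apply: (row_free_inj Wfree); rewrite mul1mx p1.
move: q1 q2 q3 q4; rewrite -/W' => q1 q2 q3 q4.
have eW : W = W' - dW by rewrite /W' addrK.
set p := specnorm Wp; set d := specnorm dW.
have K1 : forall k (Z : 'M[R]_(k, r)), (1 - xi) * frob Z <= p * frob (Z *m W').
  move=> k Z.
  have e1 : frob Z <= p * frob (Z *m W).
    by have := spec_bound_mx (Z *m W) Wp; rewrite -mulmxA WWp mulmx1.
  have e2 : frob (Z *m W) <= frob (Z *m W') + d * frob Z.
    rewrite {1}eW mulmxBr.
    apply: le_trans (frob_sub _ _) _; rewrite lerD2l; exact: spec_bound_mx.
  have e3 := ler_wpM2l hp e2.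
  have := frob_ge0 Z; have := frob_ge0 (Z *m W'); rewrite /xi /p /d in e1 e2 e3 *; nra.
have WWp' : W' *m Wp' = 1%:M.
  set Z := W' *m Wp' - 1%:M.
  have hZ : Z *m W' = 0 by rewrite /Z mulmxBl q1 mul1mx subrr.
  have := K1 _ Z; rewrite hZ frob0 mulr0 => H.
  have : frob Z = 0.
    have := frob_ge0 Z; have : 0 < 1 - xi by lra.
    nra.
  by move/frob_eq0 => /eqP; rewrite subr_eq0 => /eqP.
set P := Wp' *m W'.
have PT : P^T = P := q4.
have PP : P *m P = P by rewrite /P mulmxA -(mulmxA Wp') WWp' mulmx1.
have hT : X' *m W' = F *m P by rewrite /X' /P mulmxA.
have hWP : W *m P = W' - dW *m P.
  by rewrite {1}eW mulmxBl /P (mulmxA W') q1.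
have hA : F - X' *m W' = - (FG *m dW *m (1%:M - P)).
  rewrite hT hF -mulmxA hWP -mulmxBr -(mulmxA FG dW) -(mulmxN FG (dW *m (1%:M - P))); congr (FG *m _).
  by rewrite mulmxBr mulmx1 /W' zmod_aux.
have hfA : frob (F - X' *m W') <= d * frob FG.
  rewrite hA frobN; apply: le_trans (frob_projC _ PT PP) _; exact: spec_bound_mx.
have hfF : frob F ^+ 2 = frob (X' *m W') ^+ 2 + frob (F - X' *m W') ^+ 2.
  rewrite !frob_sq (fs_proj F PT PP) hT; congr (_ + fs _).
  by rewrite mulmxBr mulmx1.
have hY1 : (1 - xi) * frob X' <= frob FG.
  have hY : X' = FG - FG *m dW *m Wp'.
    by rewrite /X' hF {1}eW mulmxBr mulmxBl -(mulmxA FG W') WWp' mulmx1.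
  have hV : (1 - xi) * frob (FG *m dW *m Wp') <= p * (d * frob FG).
    apply: (le_trans (K1 _ _)); apply: ler_wpM2l => //.
    rewrite -mulmxA -/P; apply: le_trans (frob_proj _ PT PP) _; exact: spec_bound_mx.
  have hs : frob X' <= frob FG + frob (FG *m dW *m Wp') by rewrite {1}hY frob_sub.
  have h1x : 0 <= 1 - xi by lra.
  have := ler_wpM2l h1x hs; rewrite /xi /p /d in hV h1x *; nra.
have hY2 : (1 - xi) * frob X' <= p * frob (X' *m W') by exact: K1.
have hGF : frob FG <= p * frob F.
  by have := spec_bound_mx F Wp; rewrite {1}hF -mulmxA WWp mulmx1.
have hX : X = FG by rewrite /X hF -mulmxA WWp mulmx1.
have hW' : frob W' <= frob W + frob dW by exact: frob_triangle.
have hw0 : frob W = 0 -> frob F = 0.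
  by move/frob_eq0 => W0; rewrite hF W0 mulmx0 frob0.
split.
  rewrite /eps'; apply: (@final1 _ (frob FG) (frob F)) => //; exact: frob_ge0.
rewrite /gamma' /gamma /delta hX -hF.
apply: (@final2 _ (frob FG) (frob F) (frob X') (frob (X' *m W')) (frob (F - X' *m W')) (frob W) (frob dW) (frob W') p d n_rho r_rho) => //; exact: frob_ge0.
Qed.
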